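(* Let $K, M, R, T \in \mathbb{N}$, put $D = KM$, and let ${\bf g} \in \mathbb{C}^D$ be a prototype filter with frequency-domain version ${\bf g}_f = \sqrt{D}\,{\bf W}_D {\bf g}$. Let ${\bf A} \in \mathbb{C}^{D\times D}$ be the GFDM matrix $$ {\bf A}=[{\bf g}_{0,0}\ \cdots\ {\bf g}_{K-1,0}\ \ {\bf g}_{0,1}\ \cdots\ {\bf g}_{K-1,1}\ \cdots\ {\bf g}_{K-1,M-1}], $$ where $[{\bf g}_{k,m}]_n=[{\bf g}]_{\langle n-mK\rangle_D}\,e^{j2\pi kn/K}$ for $n=0,\dots,D-1$, $k=0,\dots,K-1$, $m=0,\dots,M-1$. Here $\langle\cdot\rangle_D$ denotes reduction modulo $D$. Column $kM'$ ordering is as displayed: $k$ varies fastest. For $r=1,\dots,R$ and $t=1,\dots,T$, let ${\bf H}_{r,t}\in\mathbb{C}^{D\times D}$ be arbitrary circulant matrices. Define the $RD\times TD$ block matrix $$ \tilde{\bf H}=\begin{bmatrix}{\bf H}_{1,1}{\bf A} & \cdots & {\bf H}_{1,T}{\bf A}\\ \vdots & \ddots & \vdots\\ {\bf H}_{R,1}{\bf A} & \cdots & {\bf H}_{R,T}{\bf A}\end{bmatrix}. $$ Assume ${\bf g}_f$ has at most $M$ consecutive (cyclically) nonzero entries. Precisely, assume there exist ${\bf g}_1\in\mathbb{C}^M$ and an integer $l$ with $0\le l<D$ such that $$ {\bf g}_f = {\bf C}_D^{\,l}\begin{bmatrix}{\bf g}_1^T & {\bf 0}^T_{(K-1)M}\end{bmatrix}^T.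 $$ Then there exist matrices ${\bf F}_0,\dots,{\bf F}_{K-1}\in\mathbb{C}^{MR\times MT}$ such that $$ \tilde{\bf H}={\bf U}^H\,\mathrm{blkdiag}(\{{\bf F}_k\}_{k=0}^{K-1})\,{\bf P}, $$ where $$ {\bf U}=({\bf S}_{K,R}\otimes{\bf I}_M)({\bf I}_R\otimes {\bf C}_D^{-l}{\bf W}_D) $$ and $$ {\bf P}=({\bf S}_{K,T}\otimes{\bf I}_M)({\bf I}_T\otimes{\bf S}_{K,M}). $$
   Context: Matrix and vector entries are indexed from zero. ${\bf W}_p$ is the normalized $p$-point DFT matrix, with $[{\bf W}_p]_{m,n}=e^{-j2\pi mn/p}/\sqrt{p}$. ${\bf I}_p$ is the $p\times p$ identity matrix, and ${\bf 0}_q$ is the $q\times 1$ zero vector. $\otimes$ denotes the Kronecker product. $\mathrm{blkdiag}(\{{\bf F}_k\}_{k=0}^{K-1})$ is the block-diagonal matrix whose $k$th diagonal block is ${\bf F}_k$. For $A\in\mathbb{N}$, ${\bf C}_A$ is the $A\times A$ cyclic-shift permutation matrix $$ {\bf C}_A=\begin{bmatrix}{\bf 0}_{A-1}^T & 1\\ {\bf I}_{A-1} & {\bf 0}_{A-1}\end{bmatrix}. $$ The paper writes this matrix as ${\bf \Pi}_A$. For $A,B\in\mathbb{N}$, ${\bf S}_{A,B}$ is the $AB\times AB$ permutation matrix defined by $[{\bf S}_{A,B}]_{mB+p,\,qA+n}=\delta_{mn}\delta_{pq}$ for all $m,n\in\{0,\dots,A-1\}$ and $p,q\in\{0,\dots,B-1\}$,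 where $\delta$ is the Kronecker delta. The paper writes this matrix as ${\bf \Pi}_{AB}$; in the theorem it appears as ${\bf \Pi}_{KR}$, ${\bf \Pi}_{KT}$, ${\bf \Pi}_{KM}$, with $(A,B)=(K,R),(K,T),(K,M)$ respectively. Interpretation (not needed for the statement): ${\bf H}_{r,t}$ models the cyclic-prefix-equivalent channel from transmit antenna $t$ to receive antenna $r$ in a MIMO-GFDM system. *)

(* Defs.v *)
From mathcomp Require Import all_boot all_algebra.
From mathcomp Require Import reals trigo.
From mathcomp Require Import complex mxtens.

Set Implicit Arguments.
Unset Strict Implicit.
Unset Printing Implicit Defensive.

Import GRing.Theory Num.Theory.
Local Open Scope ring_scope.

Section GFDM.
Variable R : realType.
Local Notation C := R[i].

Definition expj (x : R) : C := Complex (cos x) (sin x).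

Definition DFT (p : nat) : 'M[C]_p :=
  \matrix_(m < p, n < p)
    (expj (- (2 * pi * (m * n)%:R / p%:R)) / (Num.sqrt (p%:R : R))%:C%C).

(* cyclic shift permutation matrix C_A (the paper's Pi_A):
   [C_A]_{0,A-1} = 1 and [C_A]_{i,i-1} = 1 for i >= 1 *)
Definition cshift (A : nat) : 'M[C]_A :=
  \matrix_(i < A, j < A) ((val i == (j.+1 %% A)%N)%:R).

(* permutation matrix S_{A,B} (the paper's Pi_{AB}):
   [S]_{mB+p, qA+n} = delta_{mn} delta_{pq} *)
Definition Sperm (A B : nat) : 'M[C]_(A * B) :=
  \matrix_(i < A * B, j < A * B)
    (((i %/ B == j %% A)%N && (i %% B == j %/ A)%N)%:R).

Lemma ord_pos (D : nat) (i : 'I_D) : (0 < D)%N.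
Proof. by apply: leq_ltn_trans (ltn_ord i); exact: leq0n. Qed.

(* x mod D as an element of 'I_D (D > 0 witnessed by some i : 'I_D) *)
Definition ordmod (D : nat) (i : 'I_D) (x : nat) : 'I_D :=
  Ordinal (ltn_pmod x (ord_pos i)).

(* GFDM matrix A: column c = m K + k is g_{k,m},
   [g_{k,m}]_n = [g]_{<n - mK>_D} e^{j 2 pi k n / K}, D = K M *)
Definition gfdm (K M : nat) (g : 'cV[C]_(K * M)) : 'M[C]_(K * M) :=
  \matrix_(n < K * M, c < K * M)
    (g (ordmod n (n + K * M - (c %/ K) * K)) 0 *
     expj (2 * pi * ((c %% K) * n)%:R / K%:R)).

Definition circulant (D : nat) (H : 'M[C]_D) : Prop :=
  exists c : 'cV[C]_D, forall i j : 'I_D, H i j = c (ordmod i (i + D - j)) 0.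

Definition Htilde (Rn Tn D : nat) (H : 'I_Rn -> 'I_Tn -> 'M[C]_D)
  (A : 'M[C]_D) : 'M[C]_(Rn * D, Tn * D) :=
  \matrix_(i < Rn * D, j < Tn * D)
    ((H (mxtens_unindex i).1 (mxtens_unindex j).1 *m A)
       (mxtens_unindex i).2 (mxtens_unindex j).2).

Definition blkdiag (K p q : nat) (F : 'I_K -> 'M[C]_(p, q)) : 'M[C]_(K * p, K * q) :=
  \matrix_(i < K * p, j < K * q)
    (if (mxtens_unindex i).1 == (mxtens_unindex j).1
     then F (mxtens_unindex i).1 (mxtens_unindex i).2 (mxtens_unindex j).2
     else 0).

Definition pad (K M : nat) (g1 : 'cV[C]_M) : 'cV[C]_(K * M) :=
  \col_(i < K * M)
    (if (insub (val i) : option 'I_M) is Some j then g1 j 0 else 0).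

Definition adjmx (m n : nat) (A : 'M[C]_(m, n)) : 'M[C]_(n, m) :=
  (map_mx (fun x : C => x^*) A)^T.

Lemma eqKRM (K Rn M : nat) : (K * Rn * M = Rn * (K * M))%N.
Proof. by rewrite mulnAC mulnC mulnA. Qed.

Lemma eqKMR (K M Rn : nat) : (K * (M * Rn) = Rn * (K * M))%N.
Proof. by rewrite mulnA mulnC. Qed.

Definition Umat (K M Rn l : nat) : 'M[C]_(Rn * (K * M)) :=
  castmx (eqKRM K Rn M, eqKRM K Rn M) (Sperm K Rn *t (1%:M : 'M[C]_M))
  *m ((1%:M : 'M[C]_Rn) *t (invmx (cshift (K * M) ^+ l) *m DFT (K * M))).

Definition Pmat (K M Tn : nat) : 'M[C]_(Tn * (K * M)) :=
  castmx (eqKRM K Tn M, eqKRM K Tn M) (Sperm K Tn *t (1%:M : 'M[C]_M))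
  *m ((1%:M : 'M[C]_Tn) *t Sperm K M).

End GFDM.

(* Main.v *)
Require Import Defs.
From mathcomp Require Import all_boot all_algebra.
From mathcomp Require Import reals trigo.
From mathcomp Require Import complex mxtens.
Set Implicit Arguments. Unset Strict Implicit. Unset Printing Implicit Defensive.
Import order.Order.TTheory GRing.Theory Num.Theory.
Local Open Scope ring_scope.
From mathcomp Require Import ring zify.
Section PartA.
Variable R : realType.
Local Notation C := R[i].

Lemma adjmxE m n (A : 'M[C]_(m, n)) i j : adjmx A i j = (A j i)^*.
Proof. by rewrite /adjmx !mxE. Qed.

Lemma adjmxM m n p (A : 'M[C]_(m, n)) (B : 'M[C]_(n, p)) :
  adjmx (A *m B) = adjmx B *m adjmx A.
Proof. by rewrite /adjmx map_mxM trmx_mul. Qed.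

Lemma adjmxK m n (A : 'M[C]_(m, n)) : adjmx (adjmx A) = A.
Proof. by apply/matrixP=> i j; rewrite !adjmxE conjCK. Qed.

Lemma adjmx_tens m n p q (A : 'M[C]_(m, n)) (B : 'M[C]_(p, q)) :
  adjmx (A *t B) = adjmx A *t adjmx B.
Proof.
by apply/matrixP=> i j; rewrite !mxE rmorphM.
Qed.

Lemma adjmx_cast m n m' n' (e1 : m = m') (e2 : n = n') (A : 'M[C]_(m, n)) :
  adjmx (castmx (e1, e2) A) = castmx (e2, e1) (adjmx A).
Proof. by apply/matrixP=> i j; rewrite adjmxE !castmxE adjmxE. Qed.

Lemma adjmx1 n : adjmx (1%:M : 'M[C]_n) = 1%:M.
Proof. by apply/matrixP=> i j; rewrite adjmxE !mxE eq_sym; case: (_ == _); rewrite ?conjC1 ?conjC0. Qed.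

Lemma castmx_mul2 m m' n n' p p' (em : m = m') (en : n = n') (ep : p = p')
  (A : 'M[C]_(m, n)) (B : 'M[C]_(n, p)) :
  castmx (em, en) A *m castmx (en, ep) B = castmx (em, ep) (A *m B).
Proof. by case: m' / em; case: n' / en; case: p' / ep; rewrite !castmx_id. Qed.

Lemma castmx1 m m' (e : m = m') : castmx (e, e) (1%:M : 'M[C]_m) = 1%:M.
Proof. by case: m' / e; rewrite castmx_id. Qed.

Lemma tens11 m n : (1%:M : 'M[C]_m) *t (1%:M : 'M[C]_n) = 1%:M.
Proof.
apply/matrixP=> i j; case: (mxtens_indexP i)=> a b; case: (mxtens_indexP j)=> c d.
rewrite tensmxE !mxE -natrM mulnb; congr (_%:R).
by rewrite (inj_eq (can_inj (@mxtens_indexK _ _))) xpair_eqE.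
Qed.

Definition unitary n (Q : 'M[C]_n) := adjmx Q *m Q = 1%:M.

Lemma unitaryC n (Q : 'M[C]_n) : unitary Q -> Q *m adjmx Q = 1%:M.
Proof. exact: mulmx1C. Qed.

Lemma unitaryM n (P Q : 'M[C]_n) : unitary P -> unitary Q -> unitary (P *m Q).
Proof.
rewrite /unitary => hP hQ; rewrite adjmxM mulmxA -(mulmxA (adjmx Q)) hP mulmx1 hQ //.
Qed.

Lemma unitaryX n (P : 'M[C]_n) l : unitary P -> unitary (P ^+ l).
Proof.
move=> hP; elim: l => [|l IH]; first by rewrite expr0 /unitary adjmx1 mulmx1.
by rewrite exprS -mulmxE; apply: unitaryM.
Qed.

Lemma unitary_adj n (P : 'M[C]_n) : unitary P -> unitary (adjmx P).
Proof. by move=> hP; rewrite /unitary adjmxK; apply: unitaryC. Qed.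

Lemma unitary_tens m n (P : 'M[C]_m) (Q : 'M[C]_n) :
  unitary P -> unitary Q -> unitary (P *t Q).
Proof. by rewrite /unitary adjmx_tens tensmx_mul => -> ->; rewrite tens11. Qed.

Lemma unitary_cast m m' (e : m = m') (P : 'M[C]_m) :
  unitary P -> unitary (castmx (e, e) P).
Proof. by rewrite /unitary adjmx_cast castmx_mul2 => ->; rewrite castmx1. Qed.

Lemma unitary_inv n (P : 'M[C]_n) : unitary P -> invmx P = adjmx P.
Proof.
move=> hP; have uP : P \in unitmx by case/mulmx1_unit: hP.
by rewrite -[RHS]mulmx1 -(mulmxV uP) mulmxA hP mul1mx.
Qed.

Definition rowPM m n (Pi : 'M[C]_(m, n)) (p : 'I_m -> 'I_n) :=
  forall i j, Pi i j = (p i == j)%:R.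

Lemma rowPM_mul m n k (Pi : 'M[C]_(m, n)) p (hP : rowPM Pi p) (Y : 'M[C]_(n, k)) i j :
  (Pi *m Y) i j = Y (p i) j.
Proof.
 rewrite mxE (bigD1 (p i)) //= hP eqxx mul1r big1 ?addr0 // => k' hk.
by rewrite hP eq_sym (negbTE hk) mul0r.
Qed.

Lemma rowPM_mul_adj m n k (Pi : 'M[C]_(m, n)) p (hP : rowPM Pi p) (Y : 'M[C]_(k, n)) i j :
  (Y *m adjmx Pi) i j = Y i (p j).
Proof.
 rewrite mxE (bigD1 (p j)) //= adjmxE hP eqxx conjC1 mulr1 big1 ?addr0 // => k' hk.
by rewrite adjmxE hP eq_sym (negbTE hk) conjC0 mulr0.
Qed.

Lemma rowPM_unitary n (Pi : 'M[C]_n) p : rowPM Pi p -> injective p -> unitary Pi.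
Proof.
move=> hP inj; apply: mulmx1C; apply/matrixP=> i j.
by rewrite (rowPM_mul_adj hP) hP !mxE (inj_eq inj).
Qed.

Lemma rowPM_comp m n k (P1 : 'M[C]_(m, n)) (P2 : 'M[C]_(n, k)) p1 p2 :
  rowPM P1 p1 -> rowPM P2 p2 -> rowPM (P1 *m P2) (p2 \o p1).
Proof. by move=> h1 h2 i j; rewrite (rowPM_mul h1) h2. Qed.

End PartA.
Section PartC.
Variable R : realType.
Local Notation C := R[i].

Lemma expjD (x y : R) : expj (x + y) = expj x * expj y.
Proof.
have hm : forall a b c d : R, (Complex a b : C) * Complex c d = Complex (a*c - b*d) (a*d + b*c) by [].
by rewrite /expj cosD sinD hm [sin x * _ + _]addrC.
Qed.

Lemma expj0 : expj 0 = 1 :> C.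
Proof. by rewrite /expj cos0 sin0. Qed.

Lemma expjN (x : R) : expj (- x) = (expj x)^-1.
Proof.
have h : expj x * expj (- x) = 1 by rewrite -expjD subrr expj0.
have nz : expj x != 0 by apply/eqP=> e; move: h; rewrite e mul0r; apply/eqP; rewrite eq_sym oner_eq0.
by rewrite -[LHS]mul1r -(mulVf nz) -mulrA h mulr1.
Qed.

Lemma conj_expj (x : R) : (expj x)^* = expj (- x).
Proof. by rewrite /expj cosN sinN. Qed.

Lemma expj2pi : expj (2 * pi) = 1 :> C.
Proof. by rewrite /expj mulr_natl cos2pi sin2pi. Qed.

Variable D : nat.
Hypothesis D_gt0 : (0 < D)%N.

Definition om : C := expj (2 * pi / D%:R).

Lemma Dnz : (D%:R : R) != 0.
Proof. by rewrite pnatr_eq0 -lt0n. Qed.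

Lemma expj_nat (a : nat) : expj (2 * pi * a%:R / D%:R) = om ^+ a.
Proof.
elim: a => [|a IH]; first by rewrite mulr0 mul0r expj0 expr0.
rewrite exprS -IH /om -expjD; congr expj.
by rewrite -addn1 natrD; field; exact: Dnz.
Qed.

Lemma omD : om ^+ D = 1.
Proof.
rewrite -expj_nat -[X in expj X]mulrA mulfV ?Dnz // mulr1 expj2pi //.
Qed.

Lemma om_neq0 : om != 0.
Proof. by apply/eqP=> e; move: omD; rewrite e expr0n; case: D D_gt0 => // n _ /eqP; rewrite eq_sym oner_eq0. Qed.

Lemma om_neq1 (e : nat) : (0 < e < D)%N -> om ^+ e != 1.
Proof.
case/andP=> e0 eD; rewrite -expj_nat; apply/negP=> /eqP h.
have hc : cos (2 * pi * e%:R / D%:R : R) = 1 by move/(congr1 (@complex.Re _)): h.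
set y : R := pi * e%:R / D%:R.
have hy : 2 * pi * e%:R / D%:R = y + y :> R by rewrite /y; field; exact: Dnz.
move: hc; rewrite hy cosD.
have := cos2Dsin2 y => h2.
have sy : 0 < sin y.
  apply: sin_gt0_pi; apply/andP; split.
    by rewrite /y divr_gt0 ?mulr_gt0 ?pi_gt0 ?ltr0n.
  rewrite /y ltr_pdivrMr ?ltr0n // ltr_pM2l ?pi_gt0 // ltr_nat //.
move=> hc.
have : sin y ^+ 2 = 0.
  have -> : sin y ^+ 2 = ((cos y ^+ 2 + sin y ^+ 2) - (cos y * cos y - sin y * sin y)) / 2.
    by field.
  by rewrite h2 hc subrr mul0r.
by move/eqP; rewrite expf_eq0 /= (gt_eqF sy).
Qed.

Definition phi (z : int) : C := om ^ z.

Lemma phiD a b : phi (a + b) = phi a * phi b.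
Proof. by rewrite /phi expfzDr // om_neq0. Qed.

Lemma phi_nat (n : nat) : phi n%:Z = om ^+ n.
Proof. by []. Qed.

Lemma phiDz (z : int) : phi (D%:Z * z) = 1.
Proof. by rewrite /phi -exprz_exp (_ : om ^ D%:Z = om ^+ D) // omD exp1rz. Qed.

Lemma phi_eq a b w : a = b + D%:Z * w -> phi a = phi b.
Proof. by move=> ->; rewrite phiD phiDz mulr1. Qed.

Lemma phi0 : phi 0 = 1.
Proof. by rewrite /phi expr0z. Qed.

Lemma conj_phi z : (phi z)^* = phi (- z).
Proof.
have : om^* = om^-1 by rewrite /om conj_expj expjN.
rewrite /phi => h; rewrite rmorphXz ?unitfE ?om_neq0 // -exprz_inv -h. done.
Qed.

Lemma expjN_nat (a : nat) : expj (- (2 * pi * a%:R / D%:R)) = phi (- a%:Z).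
Proof. by rewrite expjN expj_nat /phi -invr_expz. Qed.

Lemma modn_int (x : nat) : ((x %% D)%N)%:Z = x%:Z - D%:Z * (x %/ D)%N%:Z.
Proof. rewrite {2}(div.divn_eq x D) PoszD PoszM; ring. Qed.


Lemma phiM_nat (z : int) (n : nat) : phi (z * n%:Z) = phi z ^+ n.
Proof. by rewrite /phi -exprz_exp. Qed.

Definition sD : C := (Num.sqrt (D%:R : R))%:C%C.

Lemma sD_conj : sD^* = sD.
Proof. by rewrite conj_Creal // complex_real. Qed.

Lemma sD_sq : sD * sD = D%:R.
Proof.
rewrite /sD -rmorphM /= -expr2 sqr_sqrtr ?ler0n //.
by rewrite rmorph_nat.
Qed.

Lemma sD_neq0 : sD != 0.
Proof.
apply/eqP=> h; move: sD_sq; rewrite h mul0r => /esym/eqP.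
by rewrite pnatr_eq0 => /eqP D0; move: D_gt0; rewrite D0.
Qed.

Lemma DFTE (f n : 'I_D) : DFT R D f n = phi (- (f * n)%N%:Z) / sD.
Proof. by rewrite /DFT mxE expjN_nat. Qed.

Lemma geom0 (z : C) : z ^+ D = 1 -> z != 1 -> \sum_(n < D) z ^+ n = 0.
Proof.
move=> zD z1; have := subrX1 z D; rewrite zD subrr => /esym/eqP.
by rewrite mulf_eq0 subr_eq0 (negbTE z1) /= => /eqP.
Qed.

Lemma conj_div (x y : C) : (x / y)^* = x^* / y^*.
Proof. by rewrite fmorph_div. Qed.

Lemma DFT_unitary : unitary (DFT R D).
Proof.
apply: mulmx1C; apply/matrixP=> f f'.
rewrite !mxE.
under eq_bigr => n _ do rewrite adjmxE !DFTE conj_div conj_phi sD_conj opprK.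
have -> : \sum_(n < D) phi (- (f * n)%N%:Z) / sD * (phi (f' * n)%N%:Z / sD)
   = (\sum_(n < D) (phi (f'%:Z - f%:Z)) ^+ n) / (sD * sD).
  rewrite mulr_suml; apply: eq_bigr => n _.
  rewrite -phiM_nat (_ : (f'%:Z - f%:Z) * n%:Z = - (f * n)%N%:Z + (f' * n)%N%:Z).
    by rewrite phiD invfM; ring.
  by rewrite !PoszM; ring.
case: (eqVneq f f') => [<-|ne].
  rewrite subrr phi0.
  under eq_bigr => n _ do rewrite expr1n.
  by rewrite sumr_const card_ord sD_sq mulr1n mulfV // pnatr_eq0 -lt0n D_gt0.
rewrite geom0 ?mul0r //.
  by rewrite -phiM_nat -(phiDz (f'%:Z - f%:Z)); congr phi; rewrite mulrC.
set e := ((f' + D - f) %% D)%N.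
have -> : phi (f'%:Z - f%:Z) = om ^+ e.
  rewrite -phi_nat; apply: (phi_eq (w := ((f' + D - f) %/ D)%N%:Z - 1)).
  rewrite /e modn_int -subzn; last by have := ltn_ord f; lia.
  rewrite PoszD; ring.
apply: om_neq1; apply/andP; split; last by rewrite /e ltn_mod.
have hf := ltn_ord f; have hf' := ltn_ord f'.
rewrite /e; case: (ltngtP f f') => h.
- have -> : (f' + D - f = (f' - f) + D)%N by lia.
  by rewrite modnDr modn_small; lia.
- by rewrite modn_small; lia.
- by move: ne; rewrite (val_inj h) eqxx.
Qed.

End PartC.
Section PartB.
Variable R : realType.
Local Notation C := R[i].

Lemma pS_proof A B (i : 'I_(A * B)) : ((i %% B) * A + i %/ B < A * B)%N.
Proof.
have h1 := mxtens_index_proof1 i; have h2 := mxtens_index_proof2 i.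
by have := mxtens_index_proof (Ordinal h2, Ordinal h1); rewrite /= [(B * A)%N]mulnC.
Qed.

Definition pS A B (i : 'I_(A * B)) : 'I_(A * B) := Ordinal (pS_proof i).

Lemma Sperm_PM A B : rowPM (Sperm R A B) (@pS A B).
Proof.
move=> i j; rewrite mxE; congr (_%:R).
have h1 := mxtens_index_proof1 i; have h2 := mxtens_index_proof2 i.
have hj : (j %% A < A)%N by rewrite ltn_mod; case: A i j h1 {h2} => // [[]].
rewrite -val_eqE /= [in RHS](div.divn_eq j A) eq_addl_mul // xpair_eqE.
by rewrite andbC.
Qed.

Lemma pS_inj A B : injective (@pS A B).
Proof.
move=> i j /(congr1 val) /= /eqP.
have h1 := mxtens_index_proof1 i; have h2 := mxtens_index_proof1 j.
rewrite eq_addl_mul // xpair_eqE => /andP[/eqP e1 /eqP e2].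
by apply: val_inj; rewrite /= (div.divn_eq i B) (div.divn_eq j B) e1 e2.
Qed.

Lemma Sperm_unitary A B : unitary (Sperm R A B).
Proof. exact: rowPM_unitary (@Sperm_PM A B) (@pS_inj A B). Qed.

Lemma cshift_adj_PM n : rowPM (adjmx (cshift R n)) (@ordS n).
Proof.
move=> i j; rewrite adjmxE mxE rmorph_nat; congr (_%:R).
by rewrite -val_eqE /= eq_sym.
Qed.

Lemma cshift_unitary n : unitary (cshift R n).
Proof.
rewrite -[cshift R n]adjmxK; apply: unitary_adj.
exact: rowPM_unitary (@cshift_adj_PM n) (@ordS_inj n).
Qed.

Lemma adjmxX n (P : 'M[C]_n) l : adjmx (P ^+ l) = (adjmx P) ^+ l.
Proof.
elim: l => [|l IH]; first by rewrite !expr0 adjmx1.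
by rewrite exprS -mulmxE adjmxM IH exprSr -mulmxE.
Qed.

Lemma rowPM1 n : rowPM (1%:M : 'M[C]_n) id.
Proof. by move=> i j; rewrite mxE. Qed.

Lemma rowPMX n (P : 'M[C]_n) p l : rowPM P p -> rowPM (P ^+ l) (iter l p).
Proof.
move=> hP; elim: l => [|l IH]; first by rewrite expr0; exact: rowPM1.
rewrite exprS -mulmxE; move=> i j; by rewrite (rowPM_comp hP IH) [in RHS]iterSr.
Qed.

Lemma iter_ordS_val n l (i : 'I_n) : val (iter l (@ordS n) i) = ((i + l) %% n)%N.
Proof.
elim: l => [|l IH]; first by rewrite addn0 modn_small.
by rewrite iterS /= IH -addn1 modnDml addn1 addnS.
Qed.

Lemma invC_PM n l : rowPM (invmx (cshift R n ^+ l)) (iter l (@ordS n)).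
Proof.
rewrite unitary_inv; last exact: unitaryX (cshift_unitary n).
by rewrite adjmxX; apply: rowPMX; exact: cshift_adj_PM.
Qed.

Lemma rowPM_tens m n p q (P : 'M[C]_(m, n)) (Q : 'M[C]_(p, q)) f g :
  rowPM P f -> rowPM Q g ->
  rowPM (P *t Q) (fun i => mxtens_index (f (mxtens_unindex i).1, g (mxtens_unindex i).2)).
Proof.
move=> hP hQ i j; case: (mxtens_indexP i)=> a b; case: (mxtens_indexP j)=> c d.
rewrite tensmxE hP hQ mxtens_indexK /= -natrM mulnb; congr (_%:R).
by rewrite (inj_eq (can_inj (@mxtens_indexK _ _))) xpair_eqE.
Qed.

Lemma rowPM_cast m n m' n' (e1 : m = m') (e2 : n = n') (P : 'M[C]_(m, n)) f :
  rowPM P f -> rowPM (castmx (e1, e2) P) (fun i => cast_ord e2 (f (cast_ord (esym e1) i))).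
Proof. by move=> hP i j; rewrite castmxE hP; congr (_%:R); rewrite -!val_eqE. Qed.

Lemma sum_tens m n (F : 'I_(m * n) -> C) :
  \sum_(k < m * n) F k = \sum_(a < m) \sum_(b < n) F (mxtens_index (a, b)).
Proof.
rewrite pair_big (reindex (@mxtens_unindex m n)) /=.
  by apply: eq_bigr => k _; rewrite mxtens_unindexK.
by exists (@mxtens_index m n) => k _; rewrite (mxtens_indexK, mxtens_unindexK).
Qed.

Lemma blk_mul Rn Tn D (Z : 'M[C]_D) (H : 'I_Rn -> 'I_Tn -> 'M[C]_D) (B : 'M[C]_D) r f t c :
  ((1%:M *t Z) *m Htilde H B) (mxtens_index (r, f)) (mxtens_index (t, c))
  = (Z *m (H r t *m B)) f c.
Proof.
rewrite mxE sum_tens (bigD1 r) //= [X in _ + X]big1 ?addr0; last first.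
  move=> a ha; apply: big1 => b _.
  by rewrite tensmxE mxE eq_sym (negbTE ha) /= !mul0r.
rewrite mxE; apply: eq_bigr => b _.
by rewrite tensmxE mxE eqxx mul1r mxE !mxtens_indexK.
Qed.

End PartB.
Section PartE.
Variable R : realType.
Local Notation C := R[i].

Definition sh D (hD : (0 < D)%N) (a : nat) (m : 'I_D) : 'I_D :=
  Ordinal (ltn_pmod (m + a) hD).

Lemma sh_inj D (hD : (0 < D)%N) a : injective (@sh D hD a).
Proof.
move=> m1 m2 /(congr1 val) /= /eqP; rewrite eqn_modDr => /eqP.
by rewrite !modn_small // => /val_inj.
Qed.

Lemma sub_shift D m a : (m < D)%N -> (a <= D)%N -> (((m + a) %% D + D - a) %% D = m)%N.
Proof.
move=> mD aD; rewrite -addnBA // modnDml -addnA subnKC // modnDr modn_small //.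
Qed.

Variables K M : nat.
Hypothesis hKM : (0 < K * M)%N.
Local Notation D := (K * M)%N.
Local Notation ph := (phi R (K * M)).
Local Notation s := (sD R (K * M)).
Local Notation W := (DFT R (K * M)).

Lemma K_gt0 : (0 < K)%N. Proof. by case: K hKM. Qed.
Lemma M_gt0 : (0 < M)%N. Proof. by case: M hKM; rewrite ?muln0. Qed.

Lemma WH (H : 'M[C]_D) : circulant H ->
  exists lam : 'I_D -> C, forall f j, (W *m H) f j = lam f * W f j.
Proof.
case=> c hc; exists (fun f : 'I_D => \sum_(m < D) ph (- (f * m)%N%:Z) * c m 0) => f j.
rewrite mxE (reindex_inj (@sh_inj D hKM j)) /= mulr_suml; apply: eq_bigr => m _.
rewrite hc !DFTE //.
have -> : ordmod (sh hKM j m) (sh hKM j m + D - j) = m.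
  by apply: val_inj; rewrite /= sub_shift // ltnW.
rewrite (_ : ph _ = ph (- (f * m)%N%:Z) * ph (- (f * j)%N%:Z)); first by ring.
rewrite -phiD //; apply: (@phi_eq R D hKM _ _ (f * ((m + j) %/ D))%N%:Z).
rewrite /= !PoszM modn_int PoszD; ring.
Qed.


Lemma expjK (a : nat) : expj (2 * pi * a%:R / K%:R) = ph (a * M)%N%:Z.
Proof.
have hK : (K%:R : R) != 0 by rewrite pnatr_eq0 -lt0n K_gt0.
have hM : (M%:R : R) != 0 by rewrite pnatr_eq0 -lt0n M_gt0.
rewrite (_ : 2 * pi * a%:R / K%:R = 2 * pi * (a * M)%N%:R / (K * M)%N%:R).
  exact: expj_nat.
by rewrite !natrM; field; rewrite hK hM.
Qed.

Lemma WA (g : 'cV[C]_D) (f c : 'I_D) :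
  (W *m gfdm g) f c =
  ph ((((c %% K) * M)%N%:Z - f%:Z) * ((c %/ K) * K)%N%:Z) *
  \sum_(n < D) (ph ((((c %% K) * M)%N%:Z - f%:Z) * n%:Z) / s * g n 0).
Proof.
have hmK : ((c %/ K) * K <= D)%N.
  by rewrite (leq_trans (leq_divM _ _)) // ltnW.
rewrite mxE (reindex_inj (@sh_inj D hKM ((c %/ K) * K))) /= mulr_sumr.
apply: eq_bigr => n _.
rewrite !mxE expjN_nat // expjK -/(sD R D).
have -> : ordmod (sh hKM ((c %/ K) * K) n) (sh hKM ((c %/ K) * K) n + D - (c %/ K) * K) = n.
  by apply: val_inj; rewrite /= sub_shift.
set x := sh hKM (c %/ K * K) n.
have E : ph (- (f * x)%N%:Z) * ph ((c %% K * x * M)%N%:Z) =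
   ph ((((c %% K) * M)%N%:Z - f%:Z) * ((c %/ K) * K)%N%:Z) * ph ((((c %% K) * M)%N%:Z - f%:Z) * n%:Z).
  rewrite -!phiD //; apply: (@phi_eq R D hKM _ _ ((((n + c %/ K * K) %/ D)%N)%:Z * (f%:Z - (c %% K * M)%N%:Z))).
  rewrite /x /= !PoszM modn_int !PoszD !PoszM; ring.
transitivity (ph (- (f * x)%N%:Z) * ph ((c %% K * x * M)%N%:Z) / s * g n 0); first by ring.
by rewrite E; ring.
Qed.


Lemma hyp_sum (g : 'cV[C]_D) (g1 : 'cV[C]_M) l
  (hg : s *: (W *m g) = cshift R D ^+ l *m pad K g1) (y : 'I_D) :
  s * \sum_(n < D) (ph (- ((iter l (@ordS D) y) * n)%N%:Z) / s * g n 0) = pad K g1 y 0.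
Proof.
have u : cshift R D ^+ l \in unitmx.
  by case/mulmx1_unit: (unitaryX l (cshift_unitary R D)).
have := congr1 (mulmx (invmx (cshift R D ^+ l))) hg; rewrite mulKmx // => <-.
rewrite (rowPM_mul (invC_PM R l)) mxE [(W *m g) _ _]mxE; congr (_ * _).
by apply: eq_bigr => n _; rewrite DFTE.
Qed.

Lemma pad_zero (g1 : 'cV[C]_M) (y : 'I_D) : (M <= y)%N -> pad K g1 y 0 = 0.
Proof. by move=> h; rewrite mxE insubN // -leqNgt. Qed.

Lemma arith1 (f k : nat) : (f < K * M)%N -> (k < K)%N -> (f %/ M != k)%N ->
  (M <= (f + K * M - k * M) %% (K * M))%N.
Proof.
move=> hf hk hne.
have hM := M_gt0.
set q := (f %/ M)%N; set r := (f %% M)%N.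
have hfe : f = (q * M + r)%N by rewrite /q /r -div.divn_eq.
have hr : (r < M)%N by rewrite ltn_mod.
have hq : (q < K)%N by rewrite /q ltn_divLR // mulnC.
case: (ltngtP q k) => h; last by move: hne; rewrite -/q h eqxx.
- have -> : (f + K * M - k * M = (K - k + q) * M + r)%N.
    rewrite hfe mulnDl mulnBl; have : (k * M <= K * M)%N by rewrite leq_mul2r ltnW ?orbT.
    lia.
  rewrite modn_small; last first.
    have : ((K - k + q) * M + r < (K - k + q).+1 * M)%N by rewrite mulSn addnC ltn_add2r.
    move/leq_trans; apply; rewrite leq_mul2r; apply/orP; right; lia.
  apply: leq_trans (leq_addr _ _); rewrite leq_pmull //; lia.
- have -> : (f + K * M - k * M = ((q - k) * M + r) + K * M)%N.
    rewrite hfe mulnBl; have : (k * M <= q * M)%N by rewrite leq_mul2r ltnW ?orbT.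
    lia.
  rewrite modnDr modn_small; last first.
    have : ((q - k) * M + r < (q - k).+1 * M)%N by rewrite mulSn addnC ltn_add2r.
    move/leq_trans; apply; rewrite leq_mul2r; apply/orP; right; lia.
  apply: leq_trans (leq_addr _ _); rewrite leq_pmull //; lia.
Qed.


Lemma core (H : 'M[C]_D) (hc : circulant H) (g : 'cV[C]_D) (g1 : 'cV[C]_M) l
  (hg : s *: (W *m g) = cshift R D ^+ l *m pad K g1) (f c : 'I_D) :
  (f %/ M != c %% K)%N -> ((invmx (cshift R D ^+ l) *m W) *m (H *m gfdm g)) f c = 0.
Proof.
move=> hne.
case: (WH hc) => lam hl.
rewrite -mulmxA (rowPM_mul (invC_PM R l)) mulmxA.
set f' := iter l (@ordS D) f.
have -> : (W *m H *m gfdm g) f' c = lam f' * (W *m gfdm g) f' c.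
  rewrite [LHS]mxE [in RHS]mxE mulr_sumr; apply: eq_bigr => j _.
  by rewrite hl mulrA.
rewrite WA.
set k := (c %% K)%N.
have hk : (k < K)%N by rewrite ltn_mod K_gt0.
have hkM : (k * M <= K * M)%N by rewrite leq_mul2r ltnW ?orbT.
pose y : 'I_D := Ordinal (ltn_pmod (f + D - k * M) hKM).
have := hyp_sum hg y.
rewrite pad_zero; last by apply: arith1 => //.
move/eqP; rewrite mulf_eq0 (negbTE (sD_neq0 _ hKM)) /= => /eqP hs.
rewrite (_ : \sum_(n < D) _ = \sum_(n < D) (ph (- (iter l (ordS (n:=D)) y * n)%N%:Z) / s * g n 0)).
  by rewrite hs !mulr0.
apply: eq_bigr => n _; congr (_ / s * _).
apply: (@phi_eq R D hKM _ _ (((((f + l) %/ D)%N)%:Z + 1 - (((f + D - k * M) %/ D)%N)%:Z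
      - (((((f + D - k * M) %% D) + l) %/ D)%N)%:Z) * n%:Z)).
rewrite /f' !iter_ordS_val /=.
rewrite !PoszM (modn_int D ((f + D - k * M) %% D + l)) PoszD.
rewrite (modn_int D (f + D - k * M)) (modn_int D (f + l)) -subzn; last by have := ltn_ord f; lia.
rewrite !PoszD; ring.
Qed.

End PartE.
Section PartF.
Variable R : realType.
Local Notation C := R[i].
Variables K M : nat.
Hypothesis hKM : (0 < K * M)%N.
Local Notation D := (K * M)%N.

Lemma arith2 (Rn i : nat) : (i < Rn * (K * M))%N ->
  ((((((i %/ M) %% Rn) * K + i %/ M %/ Rn) * M + i %% M) %% (K * M)) %/ M = i %/ M %/ Rn)%N.
Proof.
move=> hi; have hM := M_gt0 hKM.
have hb : (i %/ M %/ Rn < K)%N.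
  rewrite -divnMA ltn_divLR; last by rewrite muln_gt0 hM /=; case: Rn hi => //.
  by move: hi; rewrite (_ : (K * (M * Rn) = Rn * (K * M))%N) //; ring.
have -> : ((((i %/ M) %% Rn) * K + i %/ M %/ Rn) * M + i %% M
   = ((i %/ M) %% Rn) * (K * M) + (i %/ M %/ Rn * M + i %% M))%N by rewrite mulnDl mulnA addnA.
rewrite modnMDl modn_small; last first.
  have : (i %/ M %/ Rn * M + i %% M < (i %/ M %/ Rn).+1 * M)%N.
    by rewrite mulSn addnC ltn_add2r ltn_mod.
  by move/leq_trans; apply; rewrite leq_mul2r hb orbT.
by rewrite divnMDl // (divn_small (ltn_pmod i hM)) addn0.
Qed.

Lemma idx_ex2 m n (x : 'I_(m * n)) (P : 'I_n -> Prop) :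
  P (mxtens_unindex x).2 -> exists r f, x = mxtens_index (r, f) /\ P f.
Proof. by move=> h; exists (mxtens_unindex x).1, (mxtens_unindex x).2; rewrite -surjective_pairing mxtens_unindexK. Qed.

Lemma PR_ex Rn : exists2 p, rowPM (castmx (eqKRM K Rn M, eqKRM K Rn M) (Sperm R K Rn *t (1%:M : 'M[C]_M))) p &
  forall i : 'I_(Rn * D), exists r f, p i = mxtens_index (r, f) /\ (f %/ M = i %/ M %/ Rn)%N.
Proof.
eexists; first exact: (rowPM_cast (eqKRM K Rn M) (eqKRM K Rn M) (rowPM_tens (@Sperm_PM R K Rn) (@rowPM1 R M))).
move=> i; apply: idx_ex2 => /=; rewrite arith2 //.
Qed.

Lemma PP_ex Tn : exists2 p, rowPM (Pmat R K M Tn) p &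
  forall j : 'I_(Tn * D), exists t c, p j = mxtens_index (t, c) /\ (c %% K = j %/ M %/ Tn)%N.
Proof.
eexists.
  exact: (rowPM_comp (rowPM_cast (eqKRM K Tn M) (eqKRM K Tn M) (rowPM_tens (@Sperm_PM R K Tn) (@rowPM1 R M)))
           (rowPM_tens (@rowPM1 R Tn) (@Sperm_PM R K M))).
move=> j; eexists; eexists; split; first reflexivity.
rewrite /= modnMDl modn_small ?arith2 //.
have hT : (0 < Tn)%N by case: Tn j => [[]|].
rewrite ltn_divLR // ltn_divLR ?(M_gt0 hKM) //; have := ltn_ord j; lia.
Qed.

End PartF.
Lemma unitary1 (R : realType) n : unitary (1%:M : 'M[R[i]]_n).
Proof. by rewrite /unitary adjmx1 mulmx1. Qed.

Lemma sandwich (R : realType) m n (U : 'M[R[i]]_m) (P : 'M[R[i]]_n) (Y : 'M[R[i]]_(m, n)) :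
  unitary U -> unitary P -> adjmx U *m (U *m Y *m adjmx P) *m P = Y.
Proof.
by move=> hU hP; rewrite !mulmxA hU mul1mx -mulmxA hP mulmx1.
Qed.

Unset Implicit Arguments.

Theorem theorem1 (R : realType) (K M Rn Tn : nat)
  (g : 'cV[R[i]]_(K * M))
  (H : 'I_Rn -> 'I_Tn -> 'M[R[i]]_(K * M))
  (Hcirc : forall r t, circulant (H r t))
  (g1 : 'cV[R[i]]_M) (l : nat)
  (hl : (l < K * M)%N)
  (hg : (Num.sqrt ((K * M)%:R : R))%:C%C *: (DFT R (K * M) *m g)
        = cshift R (K * M) ^+ l *m pad K g1) :
  exists F : 'I_K -> 'M[R[i]]_(M * Rn, M * Tn),
    Htilde H (gfdm g)
    = adjmx (Umat R K M Rn l)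
      *m castmx (eqKMR K M Rn, eqKMR K M Tn) (blkdiag F)
      *m Pmat R K M Tn.
Proof.
have hKM : (0 < K * M)%N by apply: leq_ltn_trans hl.
set U := Umat R K M Rn l; set P := Pmat R K M Tn; set Ht := Htilde H (gfdm g).
set X := U *m Ht *m adjmx P.
have uZ : unitary (invmx (cshift R (K * M) ^+ l) *m DFT R (K * M)).
  apply: unitaryM; last exact: DFT_unitary.
  rewrite unitary_inv; last exact: unitaryX (cshift_unitary R _).
  by apply: unitary_adj; apply: unitaryX; apply: cshift_unitary.
have uU : unitary U.
  rewrite /U /Umat; apply: unitaryM.
    by apply: unitary_cast; apply: unitary_tens; [exact: Sperm_unitary | exact: unitary1].
  by apply: unitary_tens; [exact: unitary1 | exact: uZ].
have uP : unitary P.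
  rewrite /P /Pmat; apply: unitaryM.
    by apply: unitary_cast; apply: unitary_tens; [exact: Sperm_unitary | exact: unitary1].
  by apply: unitary_tens; [exact: unitary1 | exact: Sperm_unitary].
pose F := fun k : 'I_K => \matrix_(a < M * Rn, b < M * Tn)
  (castmx (esym (eqKMR K M Rn), esym (eqKMR K M Tn)) X) (mxtens_index (k, a)) (mxtens_index (k, b)).
exists F.
suff -> : castmx (eqKMR K M Rn, eqKMR K M Tn) (blkdiag F) = X.
  by rewrite /X sandwich.
apply/matrixP => i j; rewrite castmxE mxE.
case: eqP => [e | ne].
  rewrite mxE castmxE -surjective_pairing mxtens_unindexK e -surjective_pairing mxtens_unindexK.
  by congr (X _ _); apply: val_inj.
have [pR hR hRv] := PR_ex R hKM Rn.
have [pP hP hPv] := PP_ex R hKM Tn.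
rewrite /X (rowPM_mul_adj hP) /U /Umat -mulmxA (rowPM_mul hR).
have [r [f [-> hf]]] := hRv i.
have [t [c [-> hc]]] := hPv j.
rewrite blk_mul (core hKM (Hcirc r t) hg) //.
apply/eqP => h; apply: ne; apply: val_inj => /=.
by rewrite !divnMA -hf -hc h.
Qed.
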